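(* Let $\ell\ge 2$ and let $G$ be a pendant graph with $m$ edges and $n$ vertices. Then $\overline{G}$ is $N$-AW if and only if $\gcd(2(n-m)-1,\ell)=1$. Equivalently, if $G$ is a graph of even order $n$ and size $\binom{n}{2}-\left(\frac{n}{2}+k\right)$ such that $\overline{G}$ is a pendant graph, then $G$ is $N$-AW if and only if $\gcd(n-2k-1,\ell)=1$.
   Context: All graphs are finite and simple; $\overline{G}$ is the complement. For a graph $H$, $H\odot K_1$ is obtained from $H$ by adding, for each vertex $u$ of $H$, a new vertex adjacent only to $u$; a pendant graph is a graph of this form. Labels lie in $\mathbb{Z}_\ell$. In the neighborhood Lights Out game, toggling a vertex $w$ adds $1$ (mod $\ell$) to the label of each vertex of the closed neighborhood $N[w]$; the game is won when all labels are $0$; a graph is $N$-AW if every initial labeling can be won. *)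

(* Defs.v *)
From mathcomp Require Import all_boot all_order all_algebra.
Set Implicit Arguments. Unset Strict Implicit. Unset Printing Implicit Defensive.
Import GRing.Theory.
Local Open Scope ring_scope.

Definition simple_graph (T : finType) (e : rel T) : Prop :=
  symmetric e /\ irreflexive e.

Definition complement (T : finType) (e : rel T) : rel T :=
  fun x y => (x != y) && ~~ e x y.

Definition num_edges (T : finType) (e : rel T) : nat :=
  #|[set A : {set T} | (#|A| == 2)%N &&
      [forall x in A, forall y in A, (x != y) ==> e x y]]|.

(* Corona H ⊙ K1: vertex set V + V, inl u are the vertices of H, inr u is the
   new pendant vertex attached to u. *)
Definition corona (V : finType) (eH : rel V) : rel (V + V) :=
  fun a b => match a, b with
  | inl u, inl v => eH u v
  | inl u, inr v => u == v
  | inr u, inl v => u == v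
  | inr _, inr _ => false
  end.

Definition pendant_graph (T : finType) (e : rel T) : Prop :=
  exists (V : finType) (eH : rel V) (f : T -> V + V),
    simple_graph eH /\ bijective f /\ forall x y, e x y = corona eH (f x) (f y).

Definition closed_nbhd (T : finType) (e : rel T) (w : T) : pred T :=
  fun v => (v == w) || e w v.

Definition toggle (l : nat) (T : finType) (e : rel T) (c : T -> 'Z_l) (w : T)
  : T -> 'Z_l :=
  fun v => c v + (closed_nbhd e w v)%:R.

Definition winnable (l : nat) (T : finType) (e : rel T) (c : T -> 'Z_l) : Prop :=
  exists s : seq T, forall v, foldl (toggle e) c s v = 0.

Definition N_AW (l : nat) (T : finType) (e : rel T) : Prop :=
  forall c : T -> 'Z_l, winnable e c.

(* Main.v *)
Require Import Defs.
From mathcomp Require Import all_boot all_order all_algebra zify.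
Set Implicit Arguments. Unset Strict Implicit. Unset Printing Implicit Defensive.
Import GRing.Theory.
Local Open Scope ring_scope.

Lemma det_rank1 (R : comRingType) n (a : 'cV[R]_n) (b : 'rV[R]_n) :
  \det (1%:M + a *m b) = 1 + (b *m a) 0 0.
Proof.
have E : block_mx 1%:M 0 b 1%:M *m block_mx (1%:M + a *m b) a 0 1%:M
           *m block_mx 1%:M 0 (-b) 1%:M
         = block_mx 1%:M a 0 (1%:M + b *m a) :> 'M[R]_(n + 1).
  rewrite !mulmx_block !(mulmx0, mul0mx, mulmx1, mul1mx, addr0, add0r).
  rewrite !(mulmxDl, mulmxDr, mulmxN, mulNmx, mulmxA, mulmx1, mul1mx).
  congr block_mx.
  - by rewrite addrK.
  - by rewrite addrA addrC !addrA addNr add0r subrr.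
  - by rewrite addrC.
have := congr1 determinant E.
rewrite !det_mulmx det_lblock det_ublock det_lblock det_ublock !det1 !mul1r mulr1.
rewrite mulr1 => ->. by rewrite det_mx11 !mxE eqxx.
Qed.

Lemma sum_scalar1 (R : comNzRingType) p (i : 'I_p) : \sum_j (1%:M : 'M[R]_p) i j = 1.
Proof.
rewrite (bigD1 i) //= mxE eqxx big1 ?addr0 // => j /negbTE ji.
by rewrite mxE eq_sym ji.
Qed.

Lemma sum_block (R : nmodType) p q (a : 'M[R]_p) (b : 'M[R]_(p,q)) c (d : 'M[R]_q) :
  \sum_i \sum_j (block_mx a b c d) i j =
  \sum_i \sum_j a i j + \sum_i \sum_j b i j + \sum_i \sum_j c i j + \sum_i \sum_j d i j.
Proof.
rewrite big_split_ord /= -addrA; congr (_ + _).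
  rewrite -big_split /=; apply: eq_bigr => i _.
  by rewrite big_split_ord /=; congr (_ + _); apply: eq_bigr => j _;
     rewrite ?block_mxEul ?block_mxEur.
rewrite -big_split /=; apply: eq_bigr => i _.
rewrite big_split_ord /=; congr (_ + _); apply: eq_bigr => j _;
   by rewrite ?block_mxEdl ?block_mxEdr.
Qed.

Lemma sum_scalar2 (R : comNzRingType) p : \sum_i \sum_j (1%:M : 'M[R]_p) i j = p%:R.
Proof. by rewrite (eq_bigr (fun _ => 1)) ?sumr_const ?card_ord // => i _; apply: sum_scalar1. Qed.

Lemma key_block (R : comUnitRingType) p (Bm : 'M[R]_p) :
  ((const_mx 1 : 'M[R]_(p+p)) - block_mx Bm 1%:M 1%:M 0 \in unitmx) =
  (1 - (p + p)%:R + \sum_i \sum_j Bm i j \is a GRing.unit).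
Proof.
set A := block_mx Bm 1%:M 1%:M 0.
pose Ai := block_mx 0 1%:M 1%:M (-Bm) : 'M[R]_(p+p).
have AAi : A *m Ai = 1%:M.
  rewrite mulmx_block !(mulmx0, mul0mx, mulmx1, mul1mx, addr0, add0r, mulmxN, subrr).
  by rewrite -scalar_mx_block.
have uA : A \in unitmx by case: (mulmx1_unit AAi).
pose u := const_mx 1 : 'cV[R]_(p+p). pose v := const_mx 1 : 'rV[R]_(p+p).
have J : const_mx 1 = u *m v.
  by apply/matrixP => i j; rewrite !mxE big_ord1 !mxE mulr1.
have E : const_mx 1 - A = A *m (- (1%:M + (- (Ai *m u)) *m v)).
  rewrite mulmxN mulmxDr mulmx1 mulNmx mulmxN !mulmxA AAi mul1mx -J.
  by rewrite opprD opprK addrC.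
rewrite E unitmxE det_mulmx -scaleN1r detZ det_rank1 unitrM -unitmxE uA /= unitrM.
rewrite unitrX ?unitrN1 //=.
have -> : (v *m - (Ai *m u)) 0 0 = - \sum_i \sum_j Ai i j.
  rewrite mulmxN mxE; congr (- _); rewrite mxE; apply: eq_bigr => i _.
  rewrite !mxE mul1r; apply: eq_bigr => j _.
  by rewrite !mxE mulr1.
rewrite sum_block /Ai !sum_scalar2.
have -> : \sum_i \sum_j (0 : 'M[R]_p) i j = 0.
  by rewrite big1 // => i _; rewrite big1 // => j _; rewrite mxE.
have -> : \sum_i \sum_j (- Bm) i j = - \sum_i \sum_j Bm i j.
  rewrite -sumrN; apply: eq_bigr => i _; rewrite -sumrN; apply: eq_bigr => j _.
  by rewrite mxE.
by rewrite add0r natrD opprD opprK !addrA.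
Qed.

Lemma foldl_toggle l (T : finType) (e : rel T) (c : T -> 'Z_l) s v :
  foldl (toggle e) c s v = c v + \sum_(w <- s) (closed_nbhd e w v)%:R.
Proof.
elim: s c => [|a s IH] c /=; first by rewrite big_nil addr0.
by rewrite IH big_cons /toggle addrA.
Qed.

Lemma sum_seq_count (T : finType) (R : nmodType) (s : seq T) (F : T -> R) :
  \sum_(w <- s) F w = \sum_w F w *+ count_mem w s.
Proof.
elim: s => [|a s IH]; first by rewrite big_nil big1.
rewrite big_cons IH /=.
under [RHS]eq_bigr do rewrite mulrnDr.
rewrite big_split /=; congr (_ + _).
rewrite (bigD1 a) //= eqxx mulr1n big1 ?addr0 // => w /negbTE wa.
by rewrite eq_sym wa mulr0n.
Qed.

Lemma counts_exist (T : finType) (x : T -> nat) :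
  exists s : seq T, forall w, count_mem w s = x w.
Proof.
suff H : forall r : seq T, exists s : seq T, forall w, count_mem w s = (count_mem w r * x w)%N.
  have [s Hs] := H (enum T); exists s => w.
  by rewrite Hs count_uniq_mem ?enum_uniq // mem_enum mul1n.
elim => [|a r [s Hs]]; first by exists [::].
exists (nseq (x a) a ++ s) => w.
rewrite count_cat Hs count_nseq /= mulnDl; congr (_ + _)%N.
by case: eqP => [->|].
Qed.

Lemma NAW_sys l (T : finType) (e : rel T) :
  N_AW l e <-> forall c : T -> 'Z_l, exists x : T -> 'Z_l,
      forall v, c v + \sum_w (closed_nbhd e w v)%:R * x w = 0.
Proof.
split.
- move=> H c; have [s Hs] := H c.
  exists (fun w => (count_mem w s)%:R) => v.
  rewrite -[RHS](Hs v) foldl_toggle (sum_seq_count s); congr (_ + _).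
  by apply: eq_bigr => w _; rewrite mulr_natr.
- move=> H c; have [x Hx] := H c.
  have [s Hs] := counts_exist (fun w => nat_of_ord (x w)).
  exists s => v; rewrite foldl_toggle (sum_seq_count s) -[RHS](Hx v); congr (_ + _).
  by apply: eq_bigr => w _; rewrite Hs -[in RHS](natr_Zp (x w)) mulr_natr.
Qed.

Lemma NAW_unit l (T : finType) (e : rel T) n (g : 'I_n -> T) (gb : bijective g) :
  N_AW l e <-> (\matrix_(i, j) ((closed_nbhd e (g j) (g i))%:R : 'Z_l)) \in unitmx.
Proof.
set M := \matrix_(i, j) _.
have [gi gK giK] := gb.
have RI : forall (F : T -> 'Z_l), \sum_w F w = \sum_j F (g j).
  by move=> F; rewrite (reindex g) //; apply: onW_bij.
apply: (iff_trans (@NAW_sys l T e)); split.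
- move=> H.
  have [X HX] : exists X : 'I_n -> T -> 'Z_l, forall j v,
      - ((gi v == j)%:R) + \sum_w (closed_nbhd e w v)%:R * X j w = 0.
    apply: (@fin_all_exists _ (fun _ => T -> _) (fun j (X : T -> _) => forall v, - ((gi v == j)%:R) + \sum_w (closed_nbhd e w v)%:R * X w = 0)) => j; exact: H.
  pose B := \matrix_(i, j) X j (g i).
  suff MB : M *m B = 1%:M by case: (mulmx1_unit MB).
  apply/matrixP => i k; rewrite !mxE.
  have := HX k (g i); rewrite gK RI => /eqP; rewrite addrC subr_eq0 => /eqP <-.
  by apply: eq_bigr => j _; rewrite !mxE.
- move=> uM c.
  pose xv := invmx M *m \col_i (- c (g i)).
  exists (fun w => xv (gi w) 0) => v.
  rewrite RI.
  have -> : \sum_j (closed_nbhd e (g j) v)%:R * xv (gi (g j)) 0 = (M *m xv) (gi v) 0.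
    by rewrite mxE; apply: eq_bigr => j _; rewrite !mxE giK gK.
  by rewrite /xv mulmxA mulmxV // mul1mx mxE giK subrr.
Qed.

Local Close Scope ring_scope.

Lemma num_edges_pairs (T : finType) (e : rel T) :
  simple_graph e -> (2 * num_edges e)%N = \sum_x \sum_y (e x y : nat).
Proof.
move=> [esym eirr].
rewrite /num_edges; set E := [set A : {set T} | _].
rewrite pair_big /=.
have -> : \sum_(p : T * T) (e p.1 p.2 : nat) = \sum_(p : T * T | e p.1 p.2) 1.
  by rewrite [RHS]big_mkcond /=; apply: eq_bigr => p _; case: (e _ _).
rewrite (partition_big (fun p : T * T => [set p.1; p.2]) (mem E)) /=; last first.
  move=> [a b] /= eab; rewrite inE cards2.
  have ab : a != b by apply: contraTneq eab => ->; rewrite eirr.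
  rewrite ab /=; apply/forallP => u; apply/implyP => /set2P hu.
  apply/forallP => w; apply/implyP => /set2P hw; apply/implyP => uw.
  case: hu hw uw => -> [] -> //; rewrite ?eqxx // => _; by rewrite esym.
rewrite -sum1_card big_distrr /= [RHS]big_mkcond /=.
rewrite [LHS]big_mkcond; apply: eq_bigr => A _; case: ifP => // AE.
rewrite muln1 sum1dep_card.
move: AE; rewrite inE => /andP [/cards2P [x [y [xy ->]]] /forallP Hall].
have exy : e x y.
  by move: (Hall x); rewrite set21 /= => /forallP /(_ y); rewrite set22 xy.
have -> : 2%N = #|[set (x, y); (y, x)]|.
  by rewrite cards2 xpair_eqE (negbTE xy).
symmetry; apply: eq_card => [[a b]]; rewrite !inE /= !xpair_eqE.
apply/idP/idP.
- move=> /andP [eab /eqP S].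
  have ab : a != b by apply: contraTneq eab => ->; rewrite eirr.
  have : a \in [set x; y] by rewrite -S set21.
  have : b \in [set x; y] by rewrite -S set22.
  rewrite !inE => /orP [] /eqP Hb /orP [] /eqP Ha; rewrite Ha Hb in ab *; rewrite ?eqxx ?andbT ?orbT //=; by rewrite eqxx in ab.
- case/orP => /andP [/eqP -> /eqP ->]; first by rewrite exy eqxx.
  by rewrite esym exy /= setUC.
Qed.

Local Open Scope ring_scope.

Lemma natr_negb (R : nzRingType) (b : bool) : ((~~ b)%:R : R) = 1 - b%:R.
Proof. by case: b; rewrite ?subrr ?subr0. Qed.

Lemma pendant_NAW l (T : finType) (e eP : rel T) :
  simple_graph eP -> pendant_graph eP ->
  (forall w v, closed_nbhd e w v = ~~ eP w v) ->
  (N_AW l e <->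
   ((2 * (num_edges eP)%:Z - 2 * (#|T|)%:Z + 1)%:~R : 'Z_l) \is a GRing.unit).
Proof.
move=> sP [V [eH [f [eHs [fb Hf]]]]] Hn.
have [fi fK fiK] := fb.
pose p := #|V|.
pose h (i : 'I_(p + p)) : V + V :=
  match split i with inl a => inl (enum_val a) | inr b => inr (enum_val b) end.
pose h' (s : V + V) : 'I_(p + p) :=
  unsplit (match s with inl u => inl (enum_rank u) | inr u => inr (enum_rank u) end).
have hK : cancel h h'.
  move=> i; rewrite /h /h'; case E: (split i) => [a|b];
  by rewrite enum_valK -E splitK.
have h'K : cancel h' h.
  by move=> [u|u]; rewrite /h /h' unsplitK enum_rankK.
pose g (i : 'I_(p + p)) : T := fi (h i).
have gb : bijective g.
  exists (fun x => h' (f x)) => [i|x]; first by rewrite /g fiK hK.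
  by rewrite /g h'K fK.
have Eg : forall i j, eP (g i) (g j) = corona eH (h i) (h j).
  by move=> i j; rewrite Hf /g !fiK.
pose Bm := \matrix_(a < p, b < p) ((eH (enum_val b) (enum_val a))%:R : 'Z_l).
have EM : \matrix_(i, j) ((closed_nbhd e (g j) (g i))%:R : 'Z_l)
          = const_mx 1 - block_mx Bm 1%:M 1%:M 0.
  apply/matrixP => i j; rewrite !mxE Hn Eg natr_negb; congr (_ - _).
  rewrite -(splitK i) -(splitK j) /h !unsplitK.
  case: (split i) => a; case: (split j) => b /=.
  1-4: rewrite ?col_mxEu ?col_mxEd ?row_mxEl ?row_mxEr ?mxE ?(inj_eq enum_val_inj).
  1-4: try done. 1,2: by rewrite eq_sym.
apply: (iff_trans (NAW_unit l e gb)); rewrite EM key_block.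
have cT : #|T| = (p + p)%N by rewrite -(bij_eq_card gb) card_ord.
set S := (\sum_(a < p) \sum_(b < p) (eH (enum_val b) (enum_val a) : nat))%N.
have SB : \sum_i \sum_j Bm i j = S%:R.
  rewrite /S natr_sum; apply: eq_bigr => a _; rewrite natr_sum.
  by apply: eq_bigr => b _; rewrite mxE.
have Sm : (2 * num_edges eP)%N = (S + p + p)%N.
  rewrite num_edges_pairs // (reindex g) /=; last exact: onW_bij.
  rewrite (eq_bigr (fun i => \sum_j (eP (g i) (g j) : nat))%N); last first.
    by move=> i _; rewrite (reindex g) //=; exact: onW_bij.
  have hl : forall a, h (lshift p a) = inl (enum_val a).
    by move=> a; rewrite /h (unsplitK (inl a : 'I_p + 'I_p)).
  have hr : forall a, h (rshift p a) = inr (enum_val a).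
    by move=> a; rewrite /h (unsplitK (inr a : 'I_p + 'I_p)).
  under eq_bigr do under eq_bigr do rewrite Eg.
  rewrite big_split_ord /=.
  rewrite (eq_bigr (fun a => \sum_(b < p) (eH (enum_val a) (enum_val b) : nat) + 1)%N); last first.
    move=> a _; rewrite big_split_ord /=; congr (_ + _)%N.
    - by apply: eq_bigr => b _; rewrite !hl.
    - rewrite (bigD1 a) //= hl hr /= eqxx big1 // => b ba.
      by rewrite ?hl ?hr /= (inj_eq enum_val_inj) eq_sym (negbTE ba).
  rewrite [X in (_ + X)%N](eq_bigr (fun a => 1%N)); last first.
    move=> a _; rewrite big_split_ord /= [X in (_ + X)%N]big1 ?addn0; last by move=> b _; rewrite !hr.
    rewrite (bigD1 a) //= hl hr /= eqxx big1 // => b ba.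
    by rewrite ?hl ?hr /= (inj_eq enum_val_inj) eq_sym (negbTE ba).
  rewrite big_split /= sum_nat_const card_ord muln1 /S exchange_big /=.
  by [].
rewrite SB.
have -> : (2 * (num_edges eP)%:Z - 2 * (#|T|)%:Z + 1 = 1 - (p + p)%:Z + S%:Z)%R.
  rewrite cT; move: Sm; lia.
by rewrite intrD intrB -!pmulrn.
Qed.

Lemma unit_int l (hl : (2 <= l)%N) (z : int) :
  ((z%:~R : 'Z_l) \is a GRing.unit) <-> gcdz z (l%:Z) = 1%N.
Proof.
have H : forall n : nat, ((n%:R : 'Z_l) \is a GRing.unit) <-> gcdz n (l%:Z) = 1%N.
  move=> n; rewrite unitZpE // /gcdz /= coprime_sym /coprime.
  by split => [/eqP -> | [] ->].
case: z => n.
- by rewrite -pmulrn; exact: H.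
- rewrite NegzE intrN unitrN -pmulrn /gcdz abszN; exact: H.
Qed.

Lemma compl_simple (T : finType) (e : rel T) : simple_graph e -> simple_graph (complement e).
Proof.
move=> [es ei]; split => [x y|x]; rewrite /complement ?eqxx //.
by rewrite eq_sym es.
Qed.

Lemma sum_eq1 (T : finType) (x : T) : (\sum_y ((x == y) : nat) = 1)%N.
Proof.
rewrite (bigD1 x) //= eqxx big1 // => y /negbTE yx; by rewrite eq_sym yx.
Qed.

Lemma edges_compl (T : finType) (e : rel T) : simple_graph e ->
  (2 * num_edges e + 2 * num_edges (complement e) + #|T| = #|T| * #|T|)%N.
Proof.
move=> se; have [es ei] := se.
have Hx : forall x, (\sum_y (e x y : nat) + \sum_y (complement e x y : nat) + 1 = #|T|)%N.
  move=> x; rewrite -(sum_eq1 x) -!big_split /= -sum1_card.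
  apply: eq_big => // y _; rewrite /complement.
  by case: eqP => [->|_]; rewrite ?ei //=; case: (e x y).
rewrite !num_edges_pairs ?compl_simple //.
have S1 : (\sum_(x : T) #|T| = #|T| * #|T|)%N by rewrite sum_nat_const.
have S2 : (\sum_(x : T) 1 = #|T|)%N by rewrite sum1_card.
rewrite -S1 -[X in (_ + X)%N]S2 -!big_split /=.
  by apply: eq_bigr => x _; exact: Hx.
exact: compl_simple.
Qed.

Lemma bin2_twice n : (2 * 'C(n, 2) + n = n * n)%N.
Proof. elim: n => // n IH; rewrite binS bin1; nia. Qed.

Unset Implicit Arguments.

Theorem lemma3p10 (l : nat) (hl : (2 <= l)%N) :
  (forall (T : finType) (e : rel T), simple_graph e -> pendant_graph e ->
     (N_AW l (complement e) <->
      gcdz (2 * ((#|T|)%:Z - (num_edges e)%:Z) - 1) (l%:Z) = 1%N))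
  /\
  (forall (T : finType) (e : rel T) (k : int), simple_graph e ->
     ~~ odd #|T| ->
     (num_edges e)%:Z = ('C(#|T|, 2))%:Z - ((#|T|./2)%:Z + k) ->
     pendant_graph (complement e) ->
     (N_AW l e <-> gcdz ((#|T|)%:Z - 2 * k - 1) (l%:Z) = 1%N)).
Proof.
split.
- move=> T e se pe.
  have [es ei] := se.
  have Hn : forall w v, closed_nbhd (complement e) w v = ~~ e w v.
    move=> w v; rewrite /closed_nbhd /complement.
    by case: (eqVneq v w) => [->|vw]; rewrite ?ei //= eq_sym vw.
  apply: (iff_trans (@pendant_NAW l T (complement e) e se pe Hn)).
  apply: (iff_trans (unit_int hl _)).
  have -> : (2 * ((#|T|)%:Z - (num_edges e)%:Z) - 1 =
             - (2 * (num_edges e)%:Z - 2 * (#|T|)%:Z + 1))%R by lia.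
  by rewrite /gcdz abszN.
- move=> T e k se ev Hm pc.
  have sc := compl_simple se.
  have Hn : forall w v, closed_nbhd e w v = ~~ complement e w v.
    by move=> w v; rewrite /closed_nbhd /complement negb_and !negbK eq_sym.
  apply: (iff_trans (@pendant_NAW l T e (complement e) sc pc Hn)).
  apply: (iff_trans (unit_int hl _)).
  have H1 := edges_compl se.
  have H2 := bin2_twice #|T|.
  have H3 := odd_double_half #|T|.
  rewrite (negbTE ev) add0n -mul2n in H3.
  have -> : (2 * (num_edges (complement e))%:Z - 2 * (#|T|)%:Z + 1 =
             - ((#|T|)%:Z - 2 * k - 1))%R by lia.
  by rewrite /gcdz abszN.
Qed.
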